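(* Let $G=(V,E)$ be a split graph. An edge $e\in E$ is split-safe (i.e., $G-e$ is a split graph) if and only if $e$ is neither the middle edge of an induced $P_4$ nor the middle edge of an induced diamond in $G$.
   Context: A split graph is a graph whose vertex set can be partitioned into a clique and an independent set. In a path $P_4$ the middle edge is the edge joining its two degree-2 vertices. A diamond is $K_4$ minus one edge; its middle edge is the edge joining its two degree-3 vertices. *)

(* Defs.v *)
(* A simple graph on a finite vertex type T is a symmetric,
   irreflexive boolean relation g : rel T. *)
From mathcomp Require Import all_boot.
Set Implicit Arguments. Unset Strict Implicit. Unset Printing Implicit Defensive.

Section Graphs.
Variable T : finType.

Definition is_clique (g : rel T) (K : {set T}) : Prop :=
  {in K &, forall x y, x != y -> g x y}.

Definition is_independent (g : rel T) (I : {set T}) : Prop :=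
  {in I &, forall x y, ~~ g x y}.

Definition split_graph (g : rel T) : Prop :=
  exists K : {set T}, is_clique g K /\ is_independent g (~: K).

Definition remove_edge (g : rel T) (u v : T) : rel T :=
  fun x y => g x y && ([set x; y] != [set u; v]).

Definition induced_P4 (g : rel T) (a b c d : T) : Prop :=
  uniq [:: a; b; c; d] /\ g a b /\ g b c /\ g c d /\
  ~~ g a c /\ ~~ g b d /\ ~~ g a d.

(* {a,b,c,d} induces a diamond whose only non-edge is {a,d};
   its degree-3 vertices are b and c, so its middle edge is {b,c} *)
Definition induced_diamond (g : rel T) (a b c d : T) : Prop :=
  uniq [:: a; b; c; d] /\ g a b /\ g a c /\ g b c /\ g b d /\ g c d /\
  ~~ g a d.

Definition middle_of_induced_P4 (g : rel T) (u v : T) : Prop :=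
  exists a b c d, induced_P4 g a b c d /\ [set b; c] = [set u; v].

Definition middle_of_induced_diamond (g : rel T) (u v : T) : Prop :=
  exists a b c d, induced_diamond g a b c d /\ [set b; c] = [set u; v].

End Graphs.

(* Main.v *)
Require Import Defs.
From mathcomp Require Import all_boot.
Set Implicit Arguments. Unset Strict Implicit. Unset Printing Implicit Defensive.

Lemma pair_eq (T : finType) (x y b c : T) :
  ([set x; y] == [set b; c]) = ((x == b) && (y == c)) || ((x == c) && (y == b)).
Proof.
apply/eqP/idP.
- move=> E.
  have hx : x \in [set b; c] by rewrite -E !inE eqxx.
  have hy : y \in [set b; c] by rewrite -E !inE eqxx orbT.
  have hb : b \in [set x; y] by rewrite E !inE eqxx.
  have hc : c \in [set x; y] by rewrite E !inE eqxx orbT.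
  move: hx hy hb hc; rewrite !inE.
  by case/orP=> /eqP ?; case/orP=> /eqP ?; case/orP=> /eqP ?; case/orP=> /eqP ?;
    subst; rewrite ?eqxx ?orbT.
- by case/orP=> /andP[/eqP -> /eqP ->] //; rewrite setUC.
Qed.

Lemma F2 (T : eqType) (x y : T) : x != y -> (x == y) = false /\ (y == x) = false.
Proof. by move=> h; rewrite (negbTE h) eq_sym (negbTE h). Qed.

Lemma forward (T : finType) (g : rel T) (u v : T) :
  split_graph (remove_edge g u v) ->
  (~ middle_of_induced_P4 g u v /\ ~ middle_of_induced_diamond g u v).
Proof.
move=> [K' [hK hI]].
have cov : forall x y, remove_edge g u v x y -> (x \in K') || (y \in K').
  move=> x y e; apply/negPn/negP; rewrite negb_or => /andP[xn yn].
  have := hI x y; rewrite !in_setC xn yn => /(_ isT isT); by rewrite e.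
have ncov : forall x y, x != y -> ~~ remove_edge g u v x y ->
    ~~ ((x \in K') && (y \in K')).
  by move=> x y xy ne; apply/negP=> /andP[xK yK]; rewrite hK in ne.
split.
- move=> [a [b [c [d [[U [ab [bc [cd [ac [bd ad]]]]]] E]]]]].
  move: U; rewrite /= !inE !negb_or => /and4P[/and3P[nab nac nad] /andP[nbc nbd] ncd _].
  have h1 := cov a b; have h2 := cov c d; have h3 := ncov a c nac;
  have h4 := ncov b d nbd; have h5 := ncov a d nad; have h6 := ncov b c nbc.
  move: h1 h2 h3 h4 h5 h6; rewrite /remove_edge -E !pair_eq.
  have [e1 e1'] := F2 nab; have [e2 e2'] := F2 nac; have [e3 e3'] := F2 nad;
  have [e4 e4'] := F2 nbc; have [e5 e5'] := F2 nbd; have [e6 e6'] := F2 ncd.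
  rewrite ?e1 ?e1' ?e2 ?e2' ?e3 ?e3' ?e4 ?e4' ?e5 ?e5' ?e6 ?e6' ?eqxx /=
    ?ab ?bc ?cd (negbTE ac) (negbTE bd) (negbTE ad) /=.
  by case: (a \in K'); case: (b \in K'); case: (c \in K'); case: (d \in K');
    move=> h1 h2 h3 h4 h5 h6; move: (h1 isT) (h2 isT) (h3 isT) (h4 isT) (h5 isT) (h6 isT).
- move=> [a [b [c [d [[U [ab [ac [bc [bd [cd ad]]]]]] E]]]]].
  move: U; rewrite /= !inE !negb_or => /and4P[/and3P[nab nac nad] /andP[nbc nbd] ncd _].
  have h1 := cov a b; have h2 := cov c d; have h3 := cov a c;
  have h4 := cov b d; have h5 := ncov a d nad; have h6 := ncov b c nbc.
  move: h1 h2 h3 h4 h5 h6; rewrite /remove_edge -E !pair_eq.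
  have [e1 e1'] := F2 nab; have [e2 e2'] := F2 nac; have [e3 e3'] := F2 nad;
  have [e4 e4'] := F2 nbc; have [e5 e5'] := F2 nbd; have [e6 e6'] := F2 ncd.
  rewrite ?e1 ?e1' ?e2 ?e2' ?e3 ?e3' ?e4 ?e4' ?e5 ?e5' ?e6 ?e6' ?eqxx /=
    ?ab ?bc ?cd ?ac ?bd (negbTE ad) /=.
  by case: (a \in K'); case: (b \in K'); case: (c \in K'); case: (d \in K');
    move=> h1 h2 h3 h4 h5 h6; move: (h1 isT) (h2 isT) (h3 isT) (h4 isT) (h5 isT) (h6 isT).
Qed.

Ltac solve_uniq := rewrite /= ?inE ?negb_or; repeat (apply/andP; split); try done; by rewrite eq_sym.

Lemma remove_irr (T : finType) (g : rel T) (u v x y : T) :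
  ~~ g x y -> ~~ remove_edge g u v x y.
Proof. by move=> h; rewrite /remove_edge (negbTE h). Qed.

Lemma build1 (T : finType) (g : rel T) (gsym : symmetric g) (girr : irreflexive g)
  (K : {set T}) (hK : is_clique g K) (hI : is_independent g (~: K)) (u v w : T)
  (wK : w \in K) (wuv : w \in [set u; v]) (hw : forall x, x \notin K -> ~~ g w x) :
  split_graph (remove_edge g u v).
Proof.
exists (K :\ w); split.
- move=> x y; rewrite !inE => /andP[xw xK] /andP[yw yK] xy.
  rewrite /remove_edge hK //=; apply/negP => /eqP E.
  move: wuv; rewrite -E !inE => /orP[] /eqP ?; subst; by rewrite eqxx in xw yw.
- move=> x y hx hy; apply: remove_irr; move: hx hy.
  rewrite !inE !negb_and !negbK => hx hy.
  case/orP: hx => [/eqP -> | hx]; case/orP: hy => [/eqP -> | hy].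
  + by rewrite girr.
  + exact: hw.
  + by rewrite gsym; apply: hw.
  + by apply: hI; rewrite inE.
Qed.

Lemma build3 (T : finType) (g : rel T) (gsym : symmetric g) (girr : irreflexive g)
  (K : {set T}) (hK : is_clique g K) (hI : is_independent g (~: K)) (u v w c : T)
  (uK : u \in K) (vK : v \in K) (cK : c \notin K)
  (wK : w \in K) (wuv : w \in [set u; v]) (hc : forall y, y \in K -> g c y)
  (hw : forall x, x \notin K -> g w x -> x = c) :
  split_graph (remove_edge g u v).
Proof.
have cuv : [set c; u] != [set u; v] /\ [set c; v] != [set u; v] /\
  forall y, [set c; y] != [set u; v].
  suff H : forall y, [set c; y] != [set u; v] by split; [apply: H|split; [apply: H|]].
  move=> y; apply/negP => /eqP E.
  have : c \in [set u; v] by rewrite -E !inE eqxx.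
  by rewrite !inE => /orP[] /eqP E'; rewrite E' ?uK ?vK in cK.
case: cuv => _ [_ cuv].
exists (c |: (K :\ w)); split.
- move=> x y; rewrite !inE => /orP[/eqP -> | /andP[xw xK]] /orP[/eqP -> | /andP[yw yK]] xy.
  + by rewrite eqxx in xy.
  + by rewrite /remove_edge hc //= cuv.
  + by rewrite /remove_edge gsym hc //= setUC cuv.
  + rewrite /remove_edge hK //=; apply/negP => /eqP E.
    move: wuv; rewrite -E !inE => /orP[] /eqP ?; subst; by rewrite eqxx in xw yw.
- move=> x y hx hy; apply: remove_irr; move: hx hy.
  rewrite !inE !negb_or !negb_and !negbK => /andP[xc hx] /andP[yc hy].
  case/orP: hx => [/eqP -> | hx]; case/orP: hy => [/eqP -> | hy].
  + by rewrite girr.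
  + by apply/negP => /(hw _ hy) E; rewrite E eqxx in yc.
  + by rewrite gsym; apply/negP => /(hw _ hx) E; rewrite E eqxx in xc.
  + by apply: hI; rewrite inE.
Qed.

Lemma backward (T : finType) (g : rel T) (gsym : symmetric g) (girr : irreflexive g)
  (K : {set T}) (hK : is_clique g K) (hI : is_independent g (~: K)) (u v : T)
  (huv : g u v) (noP4 : ~ middle_of_induced_P4 g u v)
  (noD : ~ middle_of_induced_diamond g u v) :
  split_graph (remove_edge g u v).
Proof.
have neqK : forall x y, x \in K -> y \notin K -> (x != y) && (y != x).
  move=> x y xK yK; case: eqP => [E|]; first by move: yK; rewrite -E xK.
  by case: eqP => // E; move: yK; rewrite E xK.
have nuv : u != v by apply/eqP => E; rewrite E girr in huv.
have indep : forall x y, x \notin K -> y \notin K -> ~~ g x y.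
  by move=> x y xK yK; apply: hI; rewrite inE.
have [uK|uK] := boolP (u \in K); have [vK|vK] := boolP (v \in K); [idtac| | |].
2,3: exists K; split; [ | by move=> x y xK yK; apply: remove_irr; apply: hI];
  move=> x y xK yK xy; rewrite /remove_edge hK //= pair_eq;
  apply/negP => /orP[] /andP[/eqP ex /eqP ey]; subst; by rewrite ?xK ?yK in uK vK.
2: by move: (indep _ _ uK vK); rewrite huv.
have [hu|hu] := boolP [forall x, (x \notin K) ==> ~~ g u x].
  apply: (build1 gsym girr hK hI uK); first by rewrite !inE eqxx.
  by move=> x xK; move/forallP: hu => /(_ x); rewrite xK.
have [hv|hv] := boolP [forall x, (x \notin K) ==> ~~ g v x].
  apply: (build1 gsym girr hK hI vK); first by rewrite !inE eqxx orbT.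
  by move=> x xK; move/forallP: hv => /(_ x); rewrite xK.
move/forallPn: hu => [a]; rewrite negb_imply negbK => /andP[aK ua].
move/forallPn: hv => [d]; rewrite negb_imply negbK => /andP[dK vd].
have [c [cK uc vc]] : exists c, [/\ c \notin K, g u c & g v c].
  have [va|va] := boolP (g v a); first by exists a.
  have [ud|ud] := boolP (g u d); first by exists d.
  exfalso; apply: noP4; exists a, u, v, d; split => //.
  have nad : a != d by apply/eqP => E; rewrite E vd in va.
  move: (neqK _ _ uK aK) (neqK _ _ vK aK) (neqK _ _ uK dK) (neqK _ _ vK dK).
  move=> /andP[? ?] /andP[? ?] /andP[? ?] /andP[? ?].
  rewrite /induced_P4.
  do !split => //; rewrite 1?gsym //; try by apply: indep.
  solve_uniq.
have hc : forall y, y \in K -> g c y.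
  move=> y yK.
  have [->|nyu] := eqVneq y u; first by rewrite gsym.
  have [->|nyv] := eqVneq y v; first by rewrite gsym.
  apply/negPn/negP => ncy; apply: noD; exists c, u, v, y; split => //.
  move: (neqK _ _ uK cK) (neqK _ _ vK cK) (neqK _ _ yK cK).
  move=> /andP[? ?] /andP[? ?] /andP[? ?].
  rewrite /induced_diamond.
  do !split => //; rewrite 1?gsym //; try by apply: hK.
  solve_uniq.
have hcom : forall x, x \notin K -> g u x -> g v x -> x = c.
  move=> x xK ux vx; apply/eqP/negPn/negP => nxc; apply: noD; exists c, u, v, x; split => //.
  move: (neqK _ _ uK cK) (neqK _ _ vK cK) (neqK _ _ uK xK) (neqK _ _ vK xK).
  move=> /andP[? ?] /andP[? ?] /andP[? ?] /andP[? ?].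
  rewrite /induced_diamond.
  do !split => //; rewrite 1?gsym //; try by apply: indep.
  solve_uniq.
have [hu|hu] := boolP [forall x, (x \notin K) ==> g u x ==> (x == c)].
  apply: (build3 gsym girr hK hI uK vK cK uK); first by rewrite !inE eqxx.
    exact: hc.
  by move=> x xK ux; move/forallP: hu => /(_ x); rewrite xK ux => /eqP.
have [hv|hv] := boolP [forall x, (x \notin K) ==> g v x ==> (x == c)].
  apply: (build3 gsym girr hK hI uK vK cK vK); first by rewrite !inE eqxx orbT.
    exact: hc.
  by move=> x xK ux; move/forallP: hv => /(_ x); rewrite xK ux => /eqP.
move/forallPn: hu => [x]; rewrite !negb_imply => /and3P[xK ux xc].
move/forallPn: hv => [y]; rewrite !negb_imply => /and3P[yK vy yc].
have vx : ~~ g v x by apply/negP => vx; move: (hcom _ xK ux vx) => E; rewrite E eqxx in xc.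
have uy : ~~ g u y by apply/negP => uy; move: (hcom _ yK uy vy) => E; rewrite E eqxx in yc.
exfalso; apply: noP4; exists x, u, v, y; split => //.
have nxy : x != y by apply/eqP => E; rewrite E vy in vx.
move: (neqK _ _ uK xK) (neqK _ _ vK xK) (neqK _ _ uK yK) (neqK _ _ vK yK).
move=> /andP[? ?] /andP[? ?] /andP[? ?] /andP[? ?].
rewrite /induced_P4.
do !split => //; rewrite 1?gsym //; try by apply: indep.
solve_uniq.
Qed.

Theorem lemma4p2 (T : finType) (g : rel T)
  (gsym : symmetric g) (girr : irreflexive g)
  (Gsplit : split_graph g) (u v : T) (huv : g u v) :
  split_graph (remove_edge g u v) <->
  (~ middle_of_induced_P4 g u v /\ ~ middle_of_induced_diamond g u v).
Proof.
split; first exact: forward.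
case: Gsplit => K [hK hI] [nP nD].
exact: (backward gsym girr hK hI huv nP nD).
Qed.
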